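(* Let $k$ be a field, $E$ a $k$-vector space of dimension $n$, and $f\in\operatorname{End}_k(E)$ an endomorphism with annihilating (minimal) polynomial $x^n$. Let $e\in E$ be a vector with $f^{n-1}(e)\neq 0$. Then the generalized inverses $g\in\operatorname{End}_k(E)$ of $f$ are exactly the linear maps determined by $$g(f^i(e))=\begin{cases} f^{i-1}(e)+\lambda_i f^{n-1}(e) & \text{if } 1\le i\le n-1,\\ \sum_{h=0}^{n-1}\alpha_h f^h(e) & \text{if } i=0,\end{cases}$$ where $\lambda_1,\dots,\lambda_{n-1},\alpha_0,\dots,\alpha_{n-1}\in k$ are arbitrary scalars.
   Context: A generalized inverse of an endomorphism $f$ of $E$ is an endomorphism $g$ of $E$ with $f\circ g\circ f=f$. *)

(* Defs.v *)
From HB Require Import structures.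
From mathcomp Require Import all_boot all_order all_algebra.
Set Implicit Arguments. Unset Strict Implicit. Unset Printing Implicit Defensive.
Import GRing.Theory.
Local Open Scope ring_scope.

Definition lfpow (k : fieldType) (E : vectType k) (f : 'End(E)) (i : nat) : 'End(E) :=
  iter i (fun h => (f \o h)%VF) \1%VF.

Definition eval_end (k : fieldType) (E : vectType k) (p : {poly k}) (f : 'End(E)) : 'End(E) :=
  \sum_(i < size p) p`_i *: lfpow f i.

Definition is_minpoly (k : fieldType) (E : vectType k) (f : 'End(E)) (p : {poly k}) : Prop :=
  [/\ p \is monic, eval_end p f = 0 &
      forall q : {poly k}, q != 0 -> eval_end q f = 0 -> (size p <= size q)%N].

Definition gen_inverse (k : fieldType) (E : vectType k) (f g : 'End(E)) : Prop :=
  (f \o g \o f)%VF = f.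

(* Main.v *)
Require Import Defs.
From HB Require Import structures.
From mathcomp Require Import all_boot all_order all_algebra.
From mathcomp Require Import zify.
Import GRing.Theory.
Local Open Scope ring_scope.

Section H.
Variables (k : fieldType) (E : vectType k) (f : 'End(E)).

Lemma lfpowS i x : lfpow f i.+1 x = f (lfpow f i x).
Proof. by rewrite /lfpow iterS comp_lfunE. Qed.

Lemma lfpow0 x : lfpow f 0 x = x.
Proof. by rewrite /lfpow /= id_lfunE. Qed.

Lemma lfpowD a b x : lfpow f (a + b) x = lfpow f a (lfpow f b x).
Proof.
elim: a => [|a IH]; first by rewrite add0n lfpow0.
by rewrite addSn !lfpowS IH.
Qed.

Lemma lfpow_n n : is_minpoly f 'X^n -> forall x, lfpow f n x = 0.
Proof.
case=> _ H _ x.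
suff -> : lfpow f n = 0 by rewrite lfunE.
rewrite -H /eval_end size_polyXn big_ord_recr /= big1 ?add0r.
  by rewrite coefXn eqxx scale1r.
by move=> i _; rewrite coefXn (ltn_eqF (ltn_ord i)) /= scale0r.
Qed.

Lemma lfpow_ge n : is_minpoly f 'X^n -> forall i x, (n <= i)%N -> lfpow f i x = 0.
Proof.
move=> hm i x hi; rewrite -(subnK hi) lfpowD (lfpow_n _ hm) linear0 //.
Qed.

Variables (n : nat) (hm : is_minpoly f 'X^n) (e : E) (he : lfpow f n.-1 e != 0).

Lemma indep (c : 'I_n -> k) : \sum_(i < n) c i *: lfpow f i e = 0 -> forall i, c i = 0.
Proof.
move=> hs.
suff H : forall m (i : 'I_n), (i < m)%N -> c i = 0 by move=> i; apply: (H i.+1).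
elim=> [//|m IH] i lim.
have [/IH//|] := ltnP i m.
move=> mi; have {lim mi} im : nat_of_ord i = m by apply/eqP; rewrite eqn_leq -ltnS lim mi.
have := congr1 (lfpow f (n.-1 - m)) hs.
rewrite raddf_sum linear0 (bigD1 i) //= big1.
  rewrite addr0 linearZ /= -lfpowD im subnK; last by rewrite -im -ltnS prednK ?ltn_ord // (leq_ltn_trans _ (ltn_ord i)).
  by move/eqP; rewrite scaler_eq0 (negPf he) orbF => /eqP.
move=> j /negPf jne; rewrite linearZ /= -lfpowD.
have [/IH -> |] := ltnP j m; first by rewrite scale0r.
rewrite leq_eqVlt -im eq_sym (inj_eq val_inj) jne /= => ij.
rewrite (lfpow_ge _ hm) ?scaler0 //.
have := ltn_ord j; lia.
Qed.

Lemma indepn (c : nat -> k) : \sum_(i < n) c i *: lfpow f i e = 0 ->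
  forall i, (i < n)%N -> c i = 0.
Proof.
move=> hs i lin; exact: (@indep (fun j : 'I_n => c j) hs (Ordinal lin)).
Qed.

Variable hdim : \dim (fullv : {vspace E}) = n.

Definition X := [tuple lfpow f i e | i < n].

Lemma X_nth (i : 'I_n) : X`_i = lfpow f i e.
Proof. by rewrite -tnth_nth tnth_mktuple. Qed.

Lemma spanX v : v = \sum_(i < n) coord X i v *: lfpow f i e.
Proof.
have fr : free X.
  apply/freeP => c; under eq_bigr do rewrite X_nth; exact: indep.
have hX : <<X>>%VS = fullv.
  apply/eqP; rewrite eqEdim subvf hdim /=. change (n <= \dim <<X>>)%N. by move/eqP: fr => ->; rewrite size_tuple.
have vX : v \in <<X>>%VS by rewrite hX memvf.
rewrite {1}(coord_span vX); apply: eq_bigr => i _; by rewrite X_nth.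
Qed.
End H.

Theorem corollary3p8 (k : fieldType) (E : vectType k) (n : nat)
    (hdim : \dim (fullv : {vspace E}) = n)
    (f : 'End(E)) (hmin : is_minpoly f 'X^n)
    (e : E) (he : lfpow f n.-1 e != 0) :
  forall g : 'End(E),
    gen_inverse f g <->
    exists (lam : nat -> k) (alpha : nat -> k),
      g e = \sum_(h < n) alpha h *: lfpow f h e /\
      (forall i : nat, (1 <= i <= n.-1)%N ->
         g (lfpow f i e) = lfpow f i.-1 e + lam i *: lfpow f n.-1 e).
Proof.
case: n hdim hmin he => [|m] hdim hm he g.
  exfalso; move: he; rewrite lfpow0.
  have: (fullv : {vspace E}) == 0%VS by rewrite -dimv_eq0 hdim.
  by move/eqP => h0; have := memvf e; rewrite h0 memv0 => ->.
have spn v : v = \sum_(i < m.+1) coord (@X _ _ f m.+1 e) (inord i) v *: lfpow f i e.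
  rewrite {1}(@spanX _ _ _ _ hm _ he hdim v); apply: eq_bigr => i _; by rewrite inord_val.
split.
  move=> hg.
  have hgx x : f (g (f x)) = f x.
    by move: hg; rewrite /gen_inverse => /lfunP/(_ x); rewrite !comp_lfunE.
  exists (fun i => coord (@X _ _ f m.+1 e) (inord m) (g (lfpow f i e) - lfpow f i.-1 e)).
  exists (fun h => coord (@X _ _ f m.+1 e) (inord h) (g e)).
  split; first exact: spn.
  move=> i /andP [i1 im] /=.
  set w := g (lfpow f i e) - lfpow f i.-1 e.
  have fw : f w = 0.
    by rewrite /w raddfB /= -{1}(prednK i1) lfpowS hgx -lfpowS prednK // subrr.
  set cn := fun j => coord (@X _ _ f m.+1 e) (inord j) w.
  have ws := spn w; rewrite -/cn in ws.
  have z : forall j, (j < m)%N -> cn j = 0.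
    have := fw; rewrite {1}ws raddf_sum big_ord_recr /= linearZ /= -lfpowS.
    rewrite (@lfpow_ge _ _ _ _ hm) // scaler0 addr0 => h0.
    move=> j jm.
    have := @indepn _ _ f _ hm e he (fun j => if j is j'.+1 then cn j' else 0).
    rewrite big_ord_recl /= scale0r add0r.
    move=> H; apply: (H _ j.+1) => //; rewrite -[RHS]h0.
    apply: eq_bigr => l _; rewrite add0n comp_lfunE linearZ /=. by [].
  have ew : w = cn m *: lfpow f m e.
    rewrite {1}ws big_ord_recr /= big1 ?add0r // => j _.
    by have := z j (ltn_ord j); rewrite /cn => ->; rewrite scale0r.
  rewrite -ew /w addrC subrK //.
case=> lam [alpha [_ hl]].
apply/lfunP => v; rewrite !comp_lfunE.
rewrite (spn v) !linear_sum; apply: eq_bigr => j _; rewrite !linearZ /=; congr (_ *: _).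
have [jm|] := ltnP j m.
  rewrite -lfpowS (hl j.+1) //=.
  by rewrite comp_lfunE linearD linearZ /= -[f (lfpow f m e)]lfpowS (@lfpow_ge _ _ _ _ hm m.+1) // scaler0 addr0.
move=> mj; have -> : nat_of_ord j = m by apply/eqP; rewrite eqn_leq mj -ltnS ltn_ord.
by rewrite -lfpowS (@lfpow_ge _ _ _ _ hm (m.+1)) // !linear0.
Qed.
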